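(* For $n\in\mathbb{N}$ let $(U_k^{(n)})_{k\in\mathbb{N}}$ be independent random variables uniformly distributed on $\{1,\dots,n\}$. Assume $m_n\to\infty$ and $m_n=o(n)$ as $n\to\infty$. Then $${\rm Var}\Bigl(\sum_{p\le m_n,\ p\ \text{prime}}\log p\cdot\mathbbm{1}_{\{\max_{1\le k\le m_n}\lambda_p(U_k^{(n)})\ge1\}}\Bigr)=O(m_n\log m_n),\qquad n\to\infty.$$
   Context: For a prime $p$ and $k\in\mathbb{N}$, $\lambda_p(k)$ is the exponent of $p$ in the prime factorization of $k$. *)

(* Defs.v *)
From HB Require Import structures.
From mathcomp Require Import all_boot all_order all_algebra.
From mathcomp Require Import all_classical all_reals all_analysis.
Set Implicit Arguments. Unset Strict Implicit. Unset Printing Implicit Defensive.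
Import Order.TTheory GRing.Theory Num.Theory.
Local Open Scope ring_scope.

Definition lambda (p k : nat) : nat := logn p k.

(* An outcome of (U_1^{(n)}, ..., U_m^{(n)}): u : {ffun 'I_m -> 'I_n}, with
   U_{k+1} = (u k).+1 in {1,...,n}.  The joint law of m independent uniform
   variables on {1..n} is the uniform law on this finite product space. *)
Definition Uval (n m : nat) (u : {ffun 'I_m -> 'I_n}) (k : 'I_m) : nat :=
  (u k).+1.

Definition Ssum (R : realType) (n m : nat) (u : {ffun 'I_m -> 'I_n}) : R :=
  \sum_(p < m.+1 | prime p)
     ln (p%:R : R) *
     (if (1 <= \max_(k < m) lambda p (Uval u k))%N then 1 else 0).

Definition Expect (R : realType) (n m : nat) (f : {ffun 'I_m -> 'I_n} -> R) : R :=
  (\sum_(u : {ffun 'I_m -> 'I_n}) f u) / (#|{ffun 'I_m -> 'I_n}|)%:R.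

Definition VarS (R : realType) (n m : nat) : R :=
  @Expect R n m (fun u => (@Ssum R n m u - @Expect R n m (@Ssum R n m)) ^+ 2).

(* Main.v *)
Require Import Defs.
From HB Require Import structures.
From mathcomp Require Import all_boot all_order all_algebra.
From mathcomp Require Import all_classical all_reals all_analysis.
From mathcomp Require Import zify ring lra.
Import Order.TTheory GRing.Theory Num.Theory.
Local Open Scope ring_scope.
Set Implicit Arguments. Unset Strict Implicit. Unset Printing Implicit Defensive.
Local Open Scope nat_scope.
Lemma prod_dvd (P : pred nat) (e : nat -> nat) N b :
  (forall p, P p -> prime p) -> (forall p, p < b -> P p -> p ^ e p %| N) ->
  \prod_(0 <= p < b | P p) p ^ e p %| N.
Proof.
elim: b => [|b IH] hP hd; first by rewrite big_geq // dvd1n.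
rewrite big_mkcond big_nat_recr //= -big_mkcond /=.
have IH' := IH hP (fun p hp => hd p (ltnW hp)).
case: ifP => Pb; last by rewrite muln1.
rewrite Gauss_dvd ?IH' ?hd //.
rewrite big_nat_cond.
apply: (big_ind (fun x => coprime x (b ^ e b))) => //.
- exact: coprime1n.
- by move=> x y hx hy; rewrite coprimeMl hx hy.
move=> p /andP[] /andP[_ pb] Pp.
apply: coprimeXl; apply: coprimeXr.
rewrite prime_coprime ?hP // dvdn_prime2 ?hP //.
by rewrite neq_ltn pb.
Qed.

Lemma fact_pow m p : prime p -> p ^ (m %/ p) %| m`!.
Proof.
move=> pp; have p0 := prime_gt0 pp.
elim: m => [|m IH]; first by rewrite div0n.
rewrite divnS // factS.
case: (boolP (p %| m.+1)) => hd /=.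
  by rewrite add1n expnS dvdn_mul.
by rewrite add0n dvdn_mull.
Qed.

Lemma fact_le_pow m : m`! <= m ^ m.
Proof.
elim: m => // m IH; rewrite factS expnS leq_mul2l /=.
apply: leq_trans IH _; case: m => // m; rewrite leq_exp2r //.
Qed.

Lemma bin_le m k : 'C(m, k) <= 2 ^ m.
Proof.
elim: m k => [|m IH] [|k] //; first by rewrite bin0 expn_gt0.
by rewrite binS expnS mul2n -addnn leq_add.
Qed.

Lemma coprime_fact p a : prime p -> a < p -> coprime p a`!.
Proof.
move=> pp; elim: a => [|a IH] hap; first by rewrite coprimen1.
rewrite factS coprimeMr IH ?(ltnW hap) // andbT prime_coprime //.
by apply/negP => /(dvdn_leq (ltn0Sn _)); rewrite leqNgt hap.
Qed.

Lemma mid_dvd k p : prime p -> k.+2 <= p -> p < k.*2.+2 -> p %| 'C(k.*2.+1, k).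
Proof.
move=> pp h1 h2.
have hk : k <= k.*2.+1 by rewrite -addnn; lia.
have := bin_fact hk => E.
have : p %| (k.*2.+1)`! by apply: dvdn_fact; rewrite prime_gt0.
rewrite -E Gauss_dvdl // coprimeMr !coprime_fact //; rewrite -?addnn; lia.
Qed.

Lemma leg m : \prod_(0 <= p < m.+1 | prime p) p ^ (m %/ p) <= m ^ m.
Proof.
apply: leq_trans (fact_le_pow m).
apply: dvdn_leq; first exact: fact_gt0.
apply: prod_dvd => // p _ pp; exact: fact_pow.
Qed.

Lemma cheb m : \prod_(0 <= p < m.+1 | prime p) p <= 8 ^ m.
Proof.
elim/ltn_ind: m => m IH.
rewrite -(odd_double_half m) in IH *.
move: (odd m) m./2 IH => b k IH; case: b IH => IH /=.
- case: k IH => [|k] IH; first by rewrite unlock.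
  rewrite add1n (bigID (fun p => p < k.+3)) /=.
  rewrite -big_nat_widen; last by rewrite -?mul2n; lia.
  have h1 : \prod_(0 <= p < k.+3 | prime p) p <= 8 ^ k.+2.
    by apply: IH; rewrite -?mul2n; lia.
  have h2 : \prod_(0 <= p < (k.+1).*2.+2 | prime p && ~~ (p < k.+3)) p <= 'C((k.+1).*2.+1, k.+1).
    apply: dvdn_leq; first by rewrite bin_gt0; lia.
    have -> : \prod_(0 <= p < (k.+1).*2.+2 | prime p && ~~ (p < k.+3)) p =
      \prod_(0 <= p < (k.+1).*2.+2 | prime p && ~~ (p < k.+3)) p ^ (fun _ => 1) p.
      by apply: eq_bigr => p _; rewrite expn1.
    apply: prod_dvd => [p /andP[]//|p hp /andP[pp hp2]].
    rewrite expn1; apply: mid_dvd => //; lia.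
  apply: leq_trans (leq_mul h1 (leq_trans h2 (bin_le _ _))) _.
  have -> : 8 = 2 ^ 3 by [].
  rewrite -!expnM -expnD leq_pexp2l //; rewrite -?mul2n; lia.
- rewrite add0n; case: k IH => [|[|k]] IH; first by rewrite unlock.
    by rewrite unlock.
  rewrite big_mkcond big_nat_recr //= -big_mkcond /=.
  have -> : prime (k.+2).*2 = false.
    apply/negP => pk; have := dvdn_prime2 (isT : prime 2) pk.
    by rewrite -mul2n dvdn_mulr //= => /esym /eqP; rewrite -?mul2n; lia.
  rewrite muln1.
  have -> : (k.+2).*2 = (k.*2.+3).+1 by rewrite !doubleS.
  apply: leq_trans (IH _ _) _; first by rewrite -?mul2n; lia.
  by rewrite leq_pexp2l.
Qed.
Local Open Scope ring_scope.
Lemma Expect_ext (R : realType) n m (f g : {ffun 'I_m -> 'I_n} -> R) :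
  (forall u, f u = g u) -> Expect f = Expect g.
Proof. by move=> h; rewrite /Expect; congr (_ / _); apply: eq_bigr. Qed.

Lemma E_add (R : realType) n m (f g : {ffun 'I_m -> 'I_n} -> R) :
  Expect (fun u => f u + g u) = Expect f + Expect g.
Proof. by rewrite /Expect big_split /= mulrDl. Qed.

Lemma E_scale (R : realType) n m (c : R) (f : {ffun 'I_m -> 'I_n} -> R) :
  Expect (fun u => c * f u) = c * Expect f.
Proof. by rewrite /Expect -mulr_sumr mulrA. Qed.

Lemma cardT_pos n m : (0 < n)%N -> (0 < #|{ffun 'I_m -> 'I_n}|)%N.
Proof. by move=> n0; rewrite card_ffun !card_ord expn_gt0 n0. Qed.

Lemma E_const (R : realType) n m (c : R) : (0 < n)%N ->
  @Expect R n m (fun _ => c) = c.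
Proof.
move=> n0; rewrite /Expect sumr_const (_ : #|xpredT| = #|{ffun 'I_m -> 'I_n}|) // -[c *+ _]mulr_natr mulfK //.
by rewrite pnatr_eq0 -lt0n cardT_pos.
Qed.

Lemma E_sum (R : realType) n m (I : Type) (r : seq I) (P : pred I)
  (F : I -> {ffun 'I_m -> 'I_n} -> R) :
  Expect (fun u => \sum_(i <- r | P i) F i u) = \sum_(i <- r | P i) Expect (F i).
Proof. by rewrite /Expect exchange_big /= mulr_suml. Qed.

Lemma E_prod (R : realType) n m (g : 'I_n -> R) :
  @Expect R n m (fun u => \prod_(k < m) g (u k)) = ((\sum_i g i) / n%:R) ^+ m.
Proof.
rewrite /Expect -(bigA_distr_bigA (fun (k : 'I_m) j => g j)) /= prodr_const.
by rewrite card_ffun !card_ord natrX expr_div_n.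
Qed.

Definition Yf (R : realType) n m (p : nat) (u : {ffun 'I_m -> 'I_n}) : R :=
  \prod_(k < m) (if (p %| (u k).+1)%N then 0 else 1).

Lemma X_eq (R : realType) n m p (u : {ffun 'I_m -> 'I_n}) : prime p ->
  (if (1 <= \max_(k < m) lambda p (Uval u k))%N then (1:R) else 0) = 1 - Yf R p u.
Proof.
move=> pp; rewrite /Yf.
case: (boolP [exists k, (p %| (u k).+1)%N]) => [/existsP[k hk]|/existsPn hn].
- have -> : (0 < \max_(k0 < m) lambda p (Uval u k0))%N.
    apply: leq_trans (leq_bigmax k).
    by rewrite /lambda /Uval logn_gt0 mem_primes pp hk.
  by rewrite [X in _ = 1 - X](bigD1 k) //= hk mul0r subr0.
- have -> : (0 < \max_(k0 < m) lambda p (Uval u k0))%N = false.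
    apply/negbTE; rewrite -leqNgt; apply/bigmax_leqP => k _.
    by rewrite leqn0 /lambda /Uval eqn0Ngt logn_gt0 mem_primes pp (negbTE (hn k)) andbF.
  by rewrite big1 ?subrr // => k _; rewrite (negbTE (hn k)).
Qed.

Lemma S_eq (R : realType) n m (u : {ffun 'I_m -> 'I_n}) :
  Ssum R u = \sum_(p < m.+1 | prime p) ln (p%:R : R) * (1 - Yf R p u).
Proof. by rewrite /Ssum; apply: eq_bigr => p pp; rewrite X_eq. Qed.

Lemma ES (R : realType) n m : (0 < n)%N ->
  Expect (@Ssum R n m) =
  \sum_(p < m.+1 | prime p) ln (p%:R : R) * (1 - Expect (@Yf R n m p)).
Proof.
move=> n0.
rewrite (@Expect_ext R n m _ (fun u => \sum_(p < m.+1 | prime p) ln (p%:R:R) * (1 - Yf R p u))); last exact: S_eq.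
rewrite E_sum; apply: eq_bigr => p _.
rewrite E_scale; congr (_ * _).
rewrite (@Expect_ext R n m _ (fun u => 1 + (-1) * Yf R p u)); last by move=> u; rewrite mulN1r.
by rewrite E_add E_const // E_scale mulN1r.
Qed.

Lemma Var_eq (R : realType) n m : (0 < n)%N ->
  VarS R n m = \sum_(p < m.+1 | prime p) \sum_(q < m.+1 | prime q)
    ln (p%:R:R) * ln (q%:R:R) *
    (Expect (fun u => @Yf R n m p u * Yf R q u) - Expect (@Yf R n m p) * Expect (@Yf R n m q)).
Proof.
move=> n0; rewrite /VarS ES //.
rewrite (@Expect_ext R n m _ (fun u => \sum_(p < m.+1 | prime p) \sum_(q < m.+1 | prime q)
    ln (p%:R:R) * ln (q%:R:R) * ((Yf R p u * Yf R q u) + (- Expect (@Yf R n m q)) * Yf R p u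
      + (- Expect (@Yf R n m p)) * Yf R q u + Expect (@Yf R n m p) * Expect (@Yf R n m q)))).
- rewrite E_sum; apply: eq_bigr => p _; rewrite E_sum; apply: eq_bigr => q _.
  rewrite E_scale !E_add E_const // !E_scale; congr (_ * _); ring.
- move=> u; rewrite S_eq -sumrB expr2 mulr_suml; apply: eq_bigr => p _.
  rewrite mulr_sumr; apply: eq_bigr => q _; ring.
Qed.

Lemma cnt_mult d n : (0 < d)%N -> (\sum_(i < n) nat_of_bool (d %| i.+1))%N = (n %/ d)%N.
Proof.
move=> d0; elim: n => [|n IH]; first by rewrite big_ord0 div0n.
by rewrite big_ord_recr /= IH divnS // addnC.
Qed.

Lemma sum_g (R : realType) n p : (0 < p)%N ->
  \sum_(i < n) (if (p %| i.+1)%N then (0:R) else 1) = n%:R - (n %/ p)%N%:R.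
Proof.
move=> p0; rewrite -cnt_mult // natr_sum.
have -> : n%:R = \sum_(i < n) (1:R) by rewrite sumr_const card_ord.
rewrite -sumrB; apply: eq_bigr => i _; case: (p %| i.+1)%N => /=; rewrite ?subr0 ?subrr //.
Qed.

Lemma sum_gg (R : realType) n p q : prime p -> prime q -> p != q ->
  \sum_(i < n) ((if (p %| i.+1)%N then (0:R) else 1) * (if (q %| i.+1)%N then (0:R) else 1))
  = n%:R - (n %/ p)%N%:R - (n %/ q)%N%:R + (n %/ (p * q))%N%:R.
Proof.
move=> pp pq npq.
have cop : coprime p q by rewrite prime_coprime // dvdn_prime2.
rewrite -!cnt_mult ?muln_gt0 ?prime_gt0 // !natr_sum.
have -> : n%:R = \sum_(i < n) (1:R) by rewrite sumr_const card_ord.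
rewrite -!sumrB -big_split /=; apply: eq_bigr => i _.
rewrite Gauss_dvd //.
by case: (p %| i.+1)%N; case: (q %| i.+1)%N => /=; ring.
Qed.

Lemma avg01 (R : realType) n (h : 'I_n -> R) : (0 < n)%N ->
  (forall i, 0 <= h i <= 1) -> 0 <= (\sum_i h i) / n%:R <= 1.
Proof.
move=> n0 hh; have np : (0:R) < n%:R by rewrite ltr0n.
apply/andP; split.
  by apply: divr_ge0 => //; apply: sumr_ge0 => i _; case/andP: (hh i).
rewrite ler_pdivrMr // mul1r.
have -> : n%:R = \sum_(i < n) (1:R) by rewrite sumr_const card_ord.
by apply: ler_sum => i _; case/andP: (hh i).
Qed.

Lemma pow_diff (R : realType) (a b d : R) k : 0 <= a -> a <= 1 -> 0 <= b -> b <= 1 ->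
  0 <= d -> a - b <= d -> a ^+ k - b ^+ k <= k%:R * d.
Proof.
move=> a0 a1 b0 b1 d0 hd; elim: k => [|k IH]; first by rewrite !expr0 subrr mul0r.
have ak0 : 0 <= a ^+ k by apply: exprn_ge0.
have bk0 : 0 <= b ^+ k by apply: exprn_ge0.
have bk1 : b ^+ k <= 1 by apply: exprn_ile1.
have kd : 0 <= k%:R * d by apply: mulr_ge0.
have h1 : a * (a ^+ k - b ^+ k) <= k%:R * d.
  case: (lerP 0 (a ^+ k - b ^+ k)) => h; nra.
have h2 : b ^+ k * (a - b) <= d.
  case: (lerP 0 (a - b)) => h; nra.
rewrite !exprS -natr1 mulrDl mul1r.
have -> : a * a ^+ k - b * b ^+ k = a * (a ^+ k - b ^+ k) + b ^+ k * (a - b) by ring.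
lra.
Qed.

Lemma key_ineq (R : realType) (n p q x y z : R) : 0 < n -> 0 < p -> 0 < q ->
  p <= n -> q <= n -> 0 <= z -> z * (p * q) <= n -> n - p < x * p -> n - q < y * q ->
  (n - x - y + z) / n - ((n - x) / n) * ((n - y) / n) <= (p^-1 + q^-1) / n.
Proof.
move=> n0 p0 q0 pn qn z0 hz hx hy.
have a1 : n * (z * (p * q)) <= n * n by rewrite ler_pM2l.
have a2 : (n - p) * (n - q) <= (x * p) * (y * q).
  apply: ler_pM; lra.
have h1 : p * q * (n * z - x * y) - (n * q + n * p) <= 0 by nra.
rewrite -subr_le0.
have -> : (n - x - y + z) / n - ((n - x) / n) * ((n - y) / n) - (p^-1 + q^-1) / n =
  (p * q * (n * z - x * y) - (n * q + n * p)) * (p * q * n * n)^-1.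
  by field; rewrite !gt_eqF.
apply: mulr_le0_ge0 => //; rewrite invr_ge0; apply: mulr_ge0; last lra.
apply: mulr_ge0; last lra; apply: mulr_ge0; lra.
Qed.

Definition gfun (R : realType) n p (i : 'I_n) : R := if (p %| i.+1)%N then 0 else 1.

Lemma EY (R : realType) n m p :
  Expect (@Yf R n m p) = ((\sum_(i < n) gfun R p i) / n%:R) ^+ m.
Proof. exact: (@E_prod R n m (gfun R p)). Qed.

Lemma EYY (R : realType) n m p q :
  Expect (fun u => @Yf R n m p u * Yf R q u) =
  ((\sum_(i < n) (gfun R p i * gfun R q i)) / n%:R) ^+ m.
Proof.
rewrite -(@E_prod R n m (fun i => gfun R p i * gfun R q i)).
by apply: Expect_ext => u; rewrite /Yf -big_split.
Qed.

Lemma g01 (R : realType) n r (i : 'I_n) : 0 <= gfun R r i <= 1.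
Proof. by rewrite /gfun; case: (r %| i.+1)%N; rewrite ?lexx ?ler01. Qed.

Lemma cov_bound (R : realType) n m p q : (0 < n)%N -> (m <= n)%N -> prime p -> prime q ->
  (p <= m)%N -> (q <= m)%N ->
  Expect (fun u => @Yf R n m p u * Yf R q u) - Expect (@Yf R n m p) * Expect (@Yf R n m q)
  <= (p == q)%:R + m%:R * ((p%:R)^-1 + (q%:R)^-1) / n%:R.
Proof.
move=> n0 mn pp pq pm qm.
have np : (0:R) < n%:R by rewrite ltr0n.
have pR : (0:R) < p%:R by rewrite ltr0n prime_gt0.
have qR : (0:R) < q%:R by rewrite ltr0n prime_gt0.
rewrite EYY !EY.
have /andP[a0 a1] : 0 <= (\sum_(i < n) (gfun R p i * gfun R q i)) / n%:R <= 1.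
  apply: avg01 => // i; have /andP[h1 h2] := g01 R p i; have /andP[h3 h4] := g01 R q i.
  by rewrite mulr_ge0 // mulr_ile1.
have /andP[cp0 cp1] : 0 <= (\sum_(i < n) gfun R p i) / n%:R <= 1 by apply: avg01 => // i; apply: g01.
have /andP[cq0 cq1] : 0 <= (\sum_(i < n) gfun R q i) / n%:R <= 1 by apply: avg01 => // i; apply: g01.
have d0 : 0 <= (m%:R : R) * ((p%:R)^-1 + (q%:R)^-1) / n%:R.
  apply: divr_ge0; last exact: ler0n.
  apply: mulr_ge0; first exact: ler0n.
  by apply: addr_ge0; rewrite invr_ge0 ltW.
case: (eqVneq p q) => [epq|npq].
  rewrite /=.
  have : ((\sum_(i < n) (gfun R p i * gfun R q i)) / n%:R) ^+ m <= 1 by apply: exprn_ile1.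
  have : 0 <= ((\sum_(i < n) gfun R p i) / n%:R) ^+ m * ((\sum_(i < n) gfun R q i) / n%:R) ^+ m.
    by apply: mulr_ge0; apply: exprn_ge0.
  lra.
rewrite /= add0r -exprMn -mulrA.
apply: pow_diff => //.
- by apply: mulr_ge0.
- by apply: mulr_ile1.
rewrite /gfun sum_gg // !sum_g ?prime_gt0 //.
apply: key_ineq => //.
- by rewrite ler_nat (leq_trans pm mn).
- by rewrite ler_nat (leq_trans qm mn).
- by rewrite -!natrM ler_nat leq_divM.
- have := ltn_ceil n (prime_gt0 pp); rewrite -(ltr_nat R) natrM -addn1 natrD mulrDl mul1r.
  lra.
- have := ltn_ceil n (prime_gt0 pq); rewrite -(ltr_nat R) natrM -addn1 natrD mulrDl mul1r.
  lra.
Qed.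

Lemma ln_prod_nat (R : realType) (r : seq nat) (P : pred nat) (F : nat -> nat) :
  (forall i, P i -> (0 < F i)%N) ->
  \sum_(i <- r | P i) ln ((F i)%:R : R) = ln ((\prod_(i <- r | P i) F i)%N%:R).
Proof.
move=> hF; elim: r => [|a r IH]; first by rewrite !big_nil ln1.
rewrite !big_cons; case: ifP => Pa //.
rewrite IH natrM lnM // posrE ltr0n ?hF //.
exact: prodn_cond_gt0.
Qed.

Lemma theta_bound (R : realType) m :
  \sum_(p < m.+1 | prime p) ln (p%:R : R) <= m%:R * ln 8.
Proof.
rewrite -(big_mkord (fun p => prime p) (fun p => ln (p%:R : R))).
rewrite (@ln_prod_nat R _ (fun p => prime p) id) /=; last by move=> i; apply: prime_gt0.
rewrite mulr_natl -lnXn ?ltr0n // -natrX ler_ln ?posrE ?ltr0n ?expn_gt0 //.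
  by rewrite ler_nat cheb.
by apply: prodn_cond_gt0 => i; apply: prime_gt0.
Qed.

Lemma M_bound (R : realType) m : (0 < m)%N ->
  \sum_(p < m.+1 | prime p) ln (p%:R : R) / p%:R <= ln (m%:R : R) + ln 8.
Proof.
move=> m0; have mR : (0:R) < m%:R by rewrite ltr0n.
have hL : \sum_(p < m.+1 | prime p) (m %/ p)%N%:R * ln (p%:R : R) <= m%:R * ln (m%:R : R).
  rewrite -(big_mkord (fun p => prime p) (fun p => (m %/ p)%N%:R * ln (p%:R : R))).
  rewrite (eq_bigr (fun p => ln (((fun p => p ^ (m %/ p)) p)%N%:R : R))); last first.
    by move=> p pp; rewrite /= natrX lnXn ?ltr0n ?prime_gt0 // mulr_natl.
  rewrite ln_prod_nat /=; last by move=> i pi; rewrite expn_gt0 prime_gt0.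
  rewrite mulr_natl -lnXn // -natrX ler_ln ?posrE ?ltr0n ?expn_gt0 ?m0 //.
    by rewrite ler_nat leg.
  by apply: prodn_cond_gt0 => i pi; rewrite expn_gt0 prime_gt0.
have hT := theta_bound R m.
have hE : m%:R * \sum_(p < m.+1 | prime p) ln (p%:R : R) / p%:R <=
    \sum_(p < m.+1 | prime p) ((m %/ p)%N%:R * ln (p%:R : R) + ln (p%:R : R)).
  rewrite mulr_sumr; apply: ler_sum => p pp.
  have p0 : (0 < p)%N by apply: prime_gt0.
  have pR : (0:R) < p%:R by rewrite ltr0n.
  have l0 : 0 <= ln (p%:R : R) by apply: ln_ge0; rewrite ler1n.
  have h : m%:R / p%:R <= (m %/ p)%N%:R + (1:R).
    rewrite ler_pdivrMr // (_ : (m %/ p)%N%:R + 1 = ((m %/ p).+1)%:R) ?natr1 //.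
    by rewrite -natrM ler_nat; apply: ltnW (ltn_ceil m p0).
  have -> : m%:R * (ln (p%:R : R) / p%:R) = (m%:R / p%:R) * ln (p%:R : R) by ring.
  have := ler_wpM2r l0 h; lra.
rewrite big_split /= in hE.
have : m%:R * \sum_(p < m.+1 | prime p) ln (p%:R : R) / p%:R <= m%:R * (ln (m%:R : R) + ln 8) by lra.
by rewrite ler_pM2l.
Qed.

Lemma Var_ge0 (R : realType) n m : 0 <= VarS R n m.
Proof.
rewrite /VarS /Expect; apply: divr_ge0; last exact: ler0n.
by apply: sumr_ge0 => u _; apply: sqr_ge0.
Qed.

Lemma Var_bound (R : realType) n M : (0 < n)%N -> (2 <= M)%N -> (M <= n)%N ->
  VarS R n M <= (3 * ln 8 + 2 * ln 8 ^+ 2 / ln 2) * (M%:R * ln (M%:R : R)).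
Proof.
move=> n0 M2 Mn.
have nR : (0:R) < n%:R by rewrite ltr0n.
have MR : (0:R) < M%:R by rewrite ltr0n; lia.
have w0 : forall p : nat, prime p -> 0 <= ln (p%:R : R).
  by move=> p pp; apply: ln_ge0; rewrite ler1n prime_gt0.
have wM : forall p : 'I_M.+1, prime p -> ln (p%:R : R) <= ln (M%:R : R).
  move=> p pp; rewrite ler_ln; first by rewrite ler_nat -ltnS ltn_ord.
    by rewrite posrE ltr0n prime_gt0.
  by rewrite posrE.
rewrite Var_eq //.
set T := \sum_(p < M.+1 | prime p) ln (p%:R : R).
set K := \sum_(p < M.+1 | prime p) ln (p%:R : R) / p%:R.
have T0 : 0 <= T by apply: sumr_ge0 => p pp; apply: w0.
have K0 : 0 <= K.
  apply: sumr_ge0 => p pp; apply: divr_ge0; [exact: w0 | exact: ler0n].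
have TB : T <= M%:R * ln 8 by apply: theta_bound.
have KB : K <= ln (M%:R : R) + ln 8 by apply: M_bound; lia.
have step1 : \sum_(p < M.+1 | prime p) \sum_(q < M.+1 | prime q)
    ln (p%:R:R) * ln (q%:R:R) *
    (Expect (fun u => @Yf R n M p u * Yf R q u) - Expect (@Yf R n M p) * Expect (@Yf R n M q))
  <= \sum_(p < M.+1 | prime p) \sum_(q < M.+1 | prime q)
    ln (p%:R:R) * ln (q%:R:R) * ((p == q :> nat)%:R + M%:R * ((p%:R)^-1 + (q%:R)^-1) / n%:R).
  apply: ler_sum => p pp; apply: ler_sum => q pq; apply: ler_wpM2l.
    by apply: mulr_ge0; apply: w0.
  by apply: cov_bound => //; rewrite -ltnS ltn_ord.
apply: le_trans step1 _.
have inner : forall p : 'I_M.+1, prime p ->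
  \sum_(q < M.+1 | prime q)
    ln (p%:R:R) * ln (q%:R:R) * ((p == q :> nat)%:R + M%:R * ((p%:R)^-1 + (q%:R)^-1) / n%:R)
  = ln (p%:R:R) * ln (p%:R:R) + (M%:R / n%:R) * ((ln (p%:R:R) / p%:R) * T + ln (p%:R:R) * K).
  move=> p pp.
  rewrite (eq_bigr (fun q : 'I_M.+1 => ln (p%:R:R) * ln (q%:R:R) * (p == q :> nat)%:R +
     (M%:R / n%:R) * ((ln (p%:R:R) / p%:R) * ln (q%:R:R) + ln (p%:R:R) * (ln (q%:R:R) / q%:R)))); last first.
    by move=> q _; rewrite mulrDr; congr (_ + _); rewrite mulrDr !mulrDl !mulrA; ring.
  rewrite big_split /=; congr (_ + _).
    rewrite (bigD1 p) //= eqxx mulr1 big1 ?addr0 // => q /andP[_ hq].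
    have -> : (nat_of_ord p == nat_of_ord q) = false by apply/negbTE; rewrite eq_sym.
    by rewrite mulr0.
  rewrite -mulr_sumr big_split /= -!mulr_sumr //.
rewrite (eq_bigr _ inner) big_split /= -mulr_sumr big_split /= -!mulr_suml -/T -/K.
have sq : \sum_(p < M.+1 | prime p) ln (p%:R:R) * ln (p%:R:R) <= ln (M%:R : R) * T.
  rewrite /T mulr_sumr; apply: ler_sum => p pp; rewrite [X in _ <= X]mulrC.
  by apply: ler_wpM2l; [apply: w0 | apply: wM].
have l2 : 0 < ln (2 : R) by apply: ln_gt0; lra.
have lM : ln (2 : R) <= ln (M%:R : R).
  rewrite ler_ln ?posrE //; first by rewrite ler_nat.
have l8 : 0 <= ln (8 : R) by apply: ln_ge0; lra.
have r0 : 0 <= (M%:R : R) / n%:R by apply: divr_ge0; apply: ltW.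
have r1 : (M%:R : R) / n%:R <= 1 by rewrite ler_pdivrMr // mul1r ler_nat.
have e1 : (M%:R : R) / n%:R * (K * T + T * K) <= 2 * (T * K).
  have : 0 <= T * K by apply: mulr_ge0.
  nra.
have e2 : T * K <= (M%:R * ln 8) * (ln (M%:R : R) + ln 8).
  by apply: ler_pM.
have e3 : ln (M%:R : R) * T <= ln (M%:R : R) * (M%:R * ln 8).
  by apply: ler_wpM2l => //; lra.
have e4 : ln (8:R) ^+ 2 * M%:R <= ln 8 ^+ 2 / ln 2 * (M%:R * ln (M%:R : R)).
  have q1 : 1 <= ln (M%:R : R) / ln 2 by rewrite ler_pdivlMr // mul1r.
  have -> : ln (8:R) ^+ 2 / ln 2 * (M%:R * ln (M%:R : R)) = (ln 8 ^+ 2 * M%:R) * (ln (M%:R : R) / ln 2) by ring.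
  have : 0 <= ln (8:R) ^+ 2 * M%:R by apply: mulr_ge0; [apply: sqr_ge0 | apply: ltW].
  nra.
nra.
Qed.

Theorem lemma6p2 (R : realType) (m : nat -> nat)
  (hinf : forall M : nat, exists N : nat, forall n : nat, (N <= n)%N -> (M <= m n)%N)
  (hsmall : forall eps : R, 0 < eps ->
     exists N : nat, forall n : nat, (N <= n)%N -> (m n)%:R <= eps * n%:R) :
  exists C : R, exists N : nat, forall n : nat, (N <= n)%N ->
    `|VarS R n (m n)| <= C * ((m n)%:R * ln ((m n)%:R : R)).
Proof.
have [N1 h1] := hinf 2%N.
have [N2 h2] := hsmall 1 ltr01.
exists (3 * ln 8 + 2 * ln 8 ^+ 2 / ln 2), (maxn N1 N2) => n hn.
have hm2 := h1 n (leq_trans (leq_maxl _ _) hn).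
have hmn : (m n <= n)%N.
  by rewrite -(ler_nat R) -[n%:R]mul1r h2 // (leq_trans (leq_maxr _ _) hn).
rewrite ger0_norm ?Var_ge0 //; apply: Var_bound => //; lia.
Qed.
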